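(* Let $X$ be an Alexandroff space and define an equivalence relation $\sim$ on $X$ by $x\sim y$ if and only if $S(x)=S(y)$. Then the quotient space $X/\sim$ (with the quotient topology) is discrete if and only if $S(x)$ is irreducible for every $x\in X$.
   Context: A topological space $X$ is an Alexandroff space if arbitrary intersections of open sets are open. In an Alexandroff space, $S(x)$ denotes the minimal open neighborhood of $x$, i.e. the intersection of all open sets containing $x$, which is open. $S(x)$ is called irreducible if for every $y\in X$, $S(y)\subseteq S(x)$ implies $S(y)=S(x)$. *)

(* Defs.v *)
From HB Require Import structures.
From mathcomp Require Import all_boot all_order generic_quotient.
From mathcomp Require Import all_classical topology_structure quotient_topology.
Set Implicit Arguments. Unset Strict Implicit. Unset Printing Implicit Defensive.
Local Open Scope classical_set_scope.
Local Open Scope quotient_scope.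

Definition alexandroff (X : topologicalType) : Prop :=
  forall F : set (set X), F `<=` open -> open (\bigcap_(A in F) A).

Definition minnbhd (X : topologicalType) (x : X) : set X :=
  \bigcap_(A in [set A : set X | open A /\ A x]) A.

Definition irreducible_nbhd (X : topologicalType) (x : X) : Prop :=
  forall y : X, minnbhd y `<=` minnbhd x -> minnbhd y = minnbhd x.

Definition simS (X : topologicalType) : rel X :=
  fun x y => `[< minnbhd x = minnbhd y >].

Lemma simS_refl (X : topologicalType) : reflexive (@simS X).
Proof. by move=> x; apply/asboolP. Qed.
Lemma simS_sym (X : topologicalType) : symmetric (@simS X).
Proof.
move=> x y; apply/asboolP/asboolP => ->; exact: erefl.
Qed.
Lemma simS_trans (X : topologicalType) : transitive (@simS X).
Proof. by move=> y x z /asboolP exy /asboolP eyz; apply/asboolP; rewrite exy. Qed.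

Canonical simS_equiv (X : topologicalType) : equiv_rel X :=
  EquivRel (@simS X) (@simS_refl X) (@simS_sym X) (@simS_trans X).

Definition quotS (X : topologicalType) : topologicalType :=
  quotient_topology {eq_quot (simS_equiv X)}.

Definition discrete (T : topologicalType) : Prop := forall A : set T, open A.

(* Main.v *)
Require Import Defs.
From mathcomp Require Import all_boot all_classical topology_structure.
From mathcomp Require Import generic_quotient quotient_topology.
Set Implicit Arguments.
Local Open Scope classical_set_scope.
Local Open Scope quotient_scope.

Lemma minnbhd_in (X : topologicalType) (x : X) : minnbhd x x.
Proof. by move=> A [_]. Qed.

Lemma minnbhd_open (X : topologicalType) (hX : alexandroff X) (x : X) :
  open (minnbhd x).
Proof. by apply: hX => A [oA _]. Qed.

Lemma minnbhd_sub (X : topologicalType) (x : X) (U : set X) :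
  open U -> U x -> minnbhd x `<=` U.
Proof. by move=> oU Ux z; apply. Qed.

Lemma piE (X : topologicalType) (x y : X) :
  (\pi_(quotS X) x = \pi_(quotS X) y) <-> minnbhd x = minnbhd y.
Proof.
change (\pi_{eq_quot (simS_equiv X)} x = \pi y <-> minnbhd x = minnbhd y).
split.
  by move=> /eqP; rewrite eqmodE => /asboolP.
by move=> h; apply/eqP; rewrite eqmodE; apply/asboolP.
Qed.

Theorem theorem9 (X : topologicalType) (hX : alexandroff X) :
  discrete (quotS X) <-> (forall x : X, irreducible_nbhd x).
Proof.
split.
- move=> hd x y Syx.
  have o : open (\pi_(quotS X) @^-1` [set \pi_(quotS X) x]) := hd _.
  have := @minnbhd_sub _ x _ o erefl y (Syx _ (@minnbhd_in _ y)).
  by move=> /= /piE.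
- move=> hirr A.
  change (open (\pi_(quotS X) @^-1` A)).
  have -> : \pi_(quotS X) @^-1` A = \bigcup_(y in \pi_(quotS X) @^-1` A) minnbhd y.
    apply/seteqP; split => z.
      by move=> Az; exists z => //; exact: minnbhd_in.
    move=> [y Ay Syz] /=.
    have sub : minnbhd z `<=` minnbhd y.
      exact: @minnbhd_sub _ z _ (minnbhd_open hX y) Syz.
    by have /piE -> := hirr y z sub.
  by apply: bigcup_open => y _; exact: minnbhd_open.
Qed.
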